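(* Suppose $\dim_{\mathbb{C}}N=n-m\le 3$, where $N=\mathrm{span}_{\mathbb{C}}\{I_{m+1},\dots,I_n\}$ is the nilpotent subalgebra of $\mathbb{A}_n^m$. Then for every circle $C$ as described in the context, $\lambda:=\int_C\zeta^{-1}\,d\zeta=2\pi i$ (that is, $2\pi i$ times the unit of $\mathbb{A}_n^m$).
   Context: Fix natural numbers $m\le n$. $\mathbb{A}_n^m$ is a commutative associative algebra with unit over $\mathbb{C}$ with a basis $\{I_k\}_{k=1}^n$ satisfying: (1) for $r,s\in\{1,\dots,m\}$, $I_rI_s=0$ if $r\ne s$ and $I_rI_r=I_r$; (2) for $r,s\in\{m+1,\dots,n\}$, $I_rI_s=\sum_{k=\max\{r,s\}+1}^{n}\Upsilon^{s}_{r,k}I_k$ with constants $\Upsilon^s_{r,k}\in\mathbb{C}$; (3) for each $s\in\{m+1,\dots,n\}$ there is a unique $u_s\in\{1,\dots,m\}$ such that for $r\in\{1,\dots,m\}$, $I_rI_s=I_s$ if $r=u_s$ and $0$ otherwise. Unit $1=\sum_{u=1}^mI_u$; $\mathbb{A}_n^m=S\oplus_sN$ with $S=\mathrm{span}\{I_1,\dots,I_m\}$ and $N=\mathrm{span}\{I_{m+1},\dots,I_n\}$. $f_u(\sum_k\lambda_kI_k)=\lambda_u$. Let $e_1=1$, $e_2=\sum_ka_kI_k$, $e_3=\sum_kb_kI_k$ ($a_k,b_k\in\mathbb{C}$) be linearly independent over $\mathbb{R}$; $\zeta=xe_1+ye_2+ze_3$ ($x,y,z\in\mathbb{R}$), $E_3$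 their real span. Standing assumption: $f_u(E_3)=\mathbb{C}$ for all $u=1,\dots,m$. $\zeta$ is non-invertible exactly when $(x,y,z)$ lies on one of the lines $L_u=\{x+y\,\mathrm{Re}\,a_u+z\,\mathrm{Re}\,b_u=0,\ y\,\mathrm{Im}\,a_u+z\,\mathrm{Im}\,b_u=0\}$. The circle: $C\subset E_3$ is $C=\{xe_1+ye_2+ze_3:(x,y,z)\in C'\}$ for a Euclidean circle $C'\subset\mathbb{R}^3$ of radius $R>0$ centered at the origin, such that for every $u$ the image $f_u(C)$ is a positively oriented closed Jordan curve in $\mathbb{C}$ bounding a domain containing $0$. Integral: for a Jordan rectifiable curve $\gamma$ and continuous $\Psi=\sum_k(U_k+iV_k)I_k$ on $\gamma_\zeta$, $\int_{\gamma_\zeta}\Psi d\zeta:=\sum_kI_k\int_\gamma(U_k+iV_k)dx+\sum_ke_2I_k\int_\gamma(U_k+iV_k)dy+\sum_ke_3I_k\int_\gamma(U_k+iV_k)dz$. *)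

(* Defs.v *)
From mathcomp Require Import all_boot all_algebra.
From mathcomp Require Import all_classical all_reals all_analysis.
From mathcomp Require Import complex.
Import numFieldNormedType.Exports.
Set Implicit Arguments. Unset Strict Implicit. Unset Printing Implicit Defensive.
Import GRing.Theory Num.Theory.
Local Open Scope ring_scope.
Local Open Scope complex_scope.

(* Elements of A_n^m are written in the basis I_1..I_n; the paper's index j
   (1 <= j <= n) is the ordinal j-1 : 'I_n.  Thus S = span{I_k | k < m}
   and N = span{I_k | m <= k < n} (0-based). *)
Definition iC (R : realType) : R[i] := Complex 0 1.

Definition alg (R : realType) (n : nat) := {ffun 'I_n -> R[i]}.

(* Coefficient of I_k in the product I_r I_s, following rules (1)-(3):
   u : index s in N |-> u_s in S ;  Ups s r k = Upsilon^s_{r,k}. *)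
Definition sconst (R : realType) (n m : nat) (u : 'I_n -> 'I_n)
    (Ups : 'I_n -> 'I_n -> 'I_n -> R[i]) (r s k : 'I_n) : R[i] :=
  if (r < m)%N then
    if (s < m)%N then ((r == s) && (k == r))%:R
    else ((r == u s) && (k == s))%:R
  else if (s < m)%N then ((s == u r) && (k == r))%:R
  else if (maxn r s < k)%N then Ups s r k else 0.

Definition amul (R : realType) (n m : nat) (u : 'I_n -> 'I_n)
    (Ups : 'I_n -> 'I_n -> 'I_n -> R[i]) (x y : alg R n) : alg R n :=
  [ffun k => \sum_(r < n) \sum_(s < n) x r * y s * sconst m u Ups r s k].

Definition aone (R : realType) (n m : nat) : alg R n :=
  [ffun k : 'I_n => ((k < m)%N)%:R].

Definition comm_assoc (R : realType) (n m : nat) (u : 'I_n -> 'I_n)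
    (Ups : 'I_n -> 'I_n -> 'I_n -> R[i]) : Prop :=
  (forall x y : alg R n, amul m u Ups x y = amul m u Ups y x) /\
  (forall x y z : alg R n,
      amul m u Ups (amul m u Ups x y) z = amul m u Ups x (amul m u Ups y z)).

(* zeta = x e_1 + y e_2 + z e_3, with e_1 = 1, e_2 = a, e_3 = b *)
Definition zeta (R : realType) (n m : nat) (a b : alg R n) (x y z : R)
    : alg R n :=
  [ffun k => x%:C * aone R n m k + y%:C * a k + z%:C * b k].

Definition ainv (R : realType) (n m : nat) (u : 'I_n -> 'I_n)
    (Ups : 'I_n -> 'I_n -> 'I_n -> R[i]) (x : alg R n) : alg R n :=
  xget 0 (fun y : alg R n => amul m u Ups x y = aone R n m).

Definition cint (R : realType) (t0 t1 : R) (f : R -> R[i]) : R[i] :=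
  (Rintegral lebesgue_measure `[t0, t1] (fun t => complex.Re (f t)))%:C
  + iC R * (Rintegral lebesgue_measure `[t0, t1] (fun t => complex.Im (f t)))%:C.

Definition cderive (R : realType) (g : R -> R[i]) (t : R) : R[i] :=
  (derive1 (fun s => complex.Re (g s)) t)%:C
  + iC R * (derive1 (fun s => complex.Im (g s)) t)%:C.

(* The curve integral  int_{gamma_zeta} Psi d zeta  of the context, for the
   curve gamma(t) = (g 0 t, g 1 t, g 2 t), t in [t0,t1] (C^1 parametrization,
   so  int_gamma F dx = int_{t0}^{t1} F(gamma t) x'(t) dt ), where Psi t is
   the value of Psi at the point zeta(gamma t):
     sum_k I_k int (U_k+iV_k) dx + e2 sum_k I_k int (U_k+iV_k) dy
                                 + e3 sum_k I_k int (U_k+iV_k) dz. *)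
Definition curve_int (R : realType) (n m : nat) (u : 'I_n -> 'I_n)
    (Ups : 'I_n -> 'I_n -> 'I_n -> R[i]) (a b : alg R n)
    (g : 'I_3 -> R -> R) (t0 t1 : R) (Psi : R -> alg R n) : alg R n :=
  let J (j : 'I_3) : alg R n :=
    [ffun k => cint t0 t1 (fun t => Psi t k * (derive1 (g j) t)%:C)] in
  J 0 + amul m u Ups a (J 1) + amul m u Ups b (J 2%:R).

Definition jordan_closed (R : realType) (t0 t1 : R) (g : R -> R[i]) : Prop :=
  continuous (fun t : R => complex.Re (g t)) /\
  continuous (fun t : R => complex.Im (g t)) /\
  g t0 = g t1 /\
  (forall s t : R, t0 <= s < t1 -> t0 <= t < t1 -> g s = g t -> s = t).

Definition winding0 (R : realType) (t0 t1 : R) (g : R -> R[i]) : R[i] :=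
  cint t0 t1 (fun t => cderive g t / g t) / ((2 * pi)%:C * iC R).

(* g is a positively oriented closed Jordan curve bounding a domain that
   contains 0: Jordan, and 0 lies inside with index +1 (for a Jordan curve
   the index is +1 at interior points iff the curve is positively oriented,
   and 0 at exterior points). *)
Definition pos_jordan_around0 (R : realType) (t0 t1 : R) (g : R -> R[i])
    : Prop :=
  jordan_closed t0 t1 g /\ (forall t : R, t0 <= t <= t1 -> g t != 0) /\
  winding0 t0 t1 g = 1.

(* Main.v *)
From HB Require Import structures.
Require Import Defs.
From mathcomp Require Import all_boot all_algebra.
From mathcomp Require Import all_classical all_reals all_analysis.
From mathcomp Require Import complex.
From mathcomp Require Import ring lra zify.
Import numFieldNormedType.Exports.
Set Implicit Arguments. Unset Strict Implicit. Unset Printing Implicit Defensive.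
Import GRing.Theory Num.Theory.
Local Open Scope ring_scope.
Local Open Scope complex_scope.

Local Notation Re := complex.Re.
Local Notation Im := complex.Im.
Section CF.
Variable R : realType.
Implicit Types f g : R -> R[i].

Lemma ReD (x y : R[i]) : Re (x + y) = Re x + Re y. Proof. by case: x; case: y. Qed.
Lemma ImD (x y : R[i]) : Im (x + y) = Im x + Im y. Proof. by case: x; case: y. Qed.
Lemma ReM (x y : R[i]) : Re (x * y) = Re x * Re y - Im x * Im y.
Proof. by case: x => a b; case: y => c d. Qed.
Lemma ImM (x y : R[i]) : Im (x * y) = Re x * Im y + Im x * Re y.
Proof. by case: x => a b; case: y => c d /=; ring. Qed.
Lemma ReV (x : R[i]) : Re (x^-1) = Re x / (Re x ^+ 2 + Im x ^+ 2).
Proof. by case: x. Qed.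
Lemma ImV (x : R[i]) : Im (x^-1) = - Im x / (Re x ^+ 2 + Im x ^+ 2).
Proof. by case: x => a b /=; rewrite mulNr. Qed.
Lemma ReC (r : R) : Re r%:C = r. Proof. by []. Qed.
Lemma ImC (r : R) : Im r%:C = 0. Proof. by []. Qed.

Definition cont f := continuous (fun t => Re (f t)) /\ continuous (fun t => Im (f t)).
Definition C1 f f' :=
  (forall t : R, is_derive t (1:R) (fun s => Re (f s)) (Re (f' t)) /\
             is_derive t (1:R) (fun s => Im (f s)) (Im (f' t))) /\ cont f'.

Lemma isdM (h k : R -> R) (h' k' t : R) : is_derive t 1 h h' -> is_derive t 1 k k' ->
  is_derive t 1 (fun s => h s * k s) (h t * k' + k t * h').
Proof. by move=> H1 H2; have := is_deriveM H1 H2. Qed.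
Lemma isdD (h k : R -> R) (h' k' t : R) : is_derive t 1 h h' -> is_derive t 1 k k' ->
  is_derive t 1 (fun s => h s + k s) (h' + k').
Proof. by move=> H1 H2; have := is_deriveD H1 H2. Qed.
Lemma isdB (h k : R -> R) (h' k' t : R) : is_derive t 1 h h' -> is_derive t 1 k k' ->
  is_derive t 1 (fun s => h s - k s) (h' - k').
Proof. by move=> H1 H2; have := is_deriveB H1 H2. Qed.
Lemma isdN (h : R -> R) (h' t : R) : is_derive t 1 h h' ->
  is_derive t 1 (fun s => - h s) (- h').
Proof. by move=> H1; have := is_deriveN H1. Qed.
Lemma isdV (h : R -> R) (h' t : R) : h t != 0 -> is_derive t 1 h h' ->
  is_derive t 1 (fun s => (h s)^-1) (- (h t) ^- 2 * h').
Proof.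
move=> h0 H; apply: DeriveDef; first by apply: derivableV => //; case: H.
by rewrite deriveV ?(ex_derive H) // derive_val.
Qed.

Lemma contD (h k : R -> R) (t : R) : {for t, continuous h} -> {for t, continuous k} ->
  {for t, continuous (fun s => h s + k s)}.
Proof. by move=> H1 H2; have := continuousD H1 H2. Qed.
Lemma contB (h k : R -> R) (t : R) : {for t, continuous h} -> {for t, continuous k} ->
  {for t, continuous (fun s => h s - k s)}.
Proof. by move=> H1 H2; have := continuousB H1 H2. Qed.
Lemma contM (h k : R -> R) (t : R) : {for t, continuous h} -> {for t, continuous k} ->
  {for t, continuous (fun s => h s * k s)}.
Proof. by move=> H1 H2; have := continuousM H1 H2. Qed.
Lemma contN (h : R -> R) (t : R) : {for t, continuous h} ->
  {for t, continuous (fun s => - h s)}.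
Proof. by move=> H1; have := continuousN H1. Qed.
Lemma contV (h : R -> R) (t : R) : h t != 0 -> {for t, continuous h} ->
  {for t, continuous (fun s => (h s)^-1)}.
Proof. by move=> H0 H1; have := continuousV H0 H1. Qed.

Lemma contC (c : R) (t : R) : {for t, continuous (fun _ : R => c)}.
Proof. exact: cst_continuous. Qed.

Lemma contRe (h : R -> R) : continuous h -> forall t, {for t, continuous h}.
Proof. by []. Qed.

Lemma cont_add f g : cont f -> cont g -> cont (fun t => f t + g t).
Proof.
move=> [f1 f2] [g1 g2]; split => t.
  rewrite (_ : (fun t => _) = (fun t => Re (f t)) + (fun t => Re (g t))).
    by apply: continuousD; [apply: f1|apply: g1].
  by apply/funext => s; rewrite ReD.
rewrite (_ : (fun t => _) = (fun t => Im (f t)) + (fun t => Im (g t))).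
  by apply: continuousD; [apply: f2|apply: g2].
by apply/funext => s; rewrite ImD.
Qed.

Lemma cont_mul f g : cont f -> cont g -> cont (fun t => f t * g t).
Proof.
move=> [f1 f2] [g1 g2]; split => t.
  rewrite (_ : (fun t => _) = ((fun t => Re (f t)) \* (fun t => Re (g t))) -
     ((fun t => Im (f t)) \* (fun t => Im (g t)))).
    by apply: continuousB; apply: continuousM; [apply: f1|apply: g1|apply: f2|apply: g2].
  by apply/funext => s; rewrite ReM.
rewrite (_ : (fun t => _) = ((fun t => Re (f t)) \* (fun t => Im (g t))) +
     ((fun t => Im (f t)) \* (fun t => Re (g t)))).
  by apply: continuousD; apply: continuousM; [apply: f1|apply: g2|apply: f2|apply: g1].
by apply/funext => s; rewrite ImM.
Qed.

Lemma cont_cst (c : R[i]) : cont (fun _ => c).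
Proof. by split => t; apply: cst_continuous. Qed.

Lemma cont_real (h : R -> R) : continuous h -> cont (fun t => (h t)%:C).
Proof. by move=> hc; split => //= t; apply: cst_continuous. Qed.

Lemma cont_sum n (F : 'I_n -> R -> R[i]) : (forall i, cont (F i)) ->
  cont (fun t => \sum_(i < n) F i t).
Proof.
move=> H; elim: n F H => [|n IH] F H.
  by rewrite (_ : (fun t => _) = fun _ => 0); [exact: cont_cst|apply/funext=> t; rewrite big_ord0].
rewrite (_ : (fun t => _) = fun t => F ord0 t + \sum_(i < n) F (lift ord0 i) t).
  by apply: cont_add => //; apply: IH.
by apply/funext => t; rewrite big_ord_recl.
Qed.

Lemma cont_ext f g : cont f -> (forall t, f t = g t) -> cont g.
Proof. by move=> H /funext <-. Qed.

Lemma C1_cont f f' : C1 f f' -> cont f.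
Proof.
move=> [H _]; split => t.
  have [H1 _] := H t.
  by apply/differentiable_continuous/derivable1_diffP; by case: H1.
have [_ H1] := H t.
by apply/differentiable_continuous/derivable1_diffP; by case: H1.
Qed.

Arguments C1_cont {f f'}.

Lemma C1_ext f g f' g' : C1 f f' -> (forall t, f t = g t) -> (forall t, f' t = g' t) -> C1 g g'.
Proof. by move=> H /funext <- /funext <-. Qed.

Lemma C1_add f g f' g' : C1 f f' -> C1 g g' -> C1 (fun t => f t + g t) (fun t => f' t + g' t).
Proof.
move=> [Hf cf] [Hg cg]; split; last exact: cont_add.
move=> t; have [f1 f2] := Hf t; have [g1 g2] := Hg t; split.
  under eq_fun do rewrite ReD; rewrite ReD; exact: isdD.
under eq_fun do rewrite ImD; rewrite ImD; exact: isdD.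
Qed.

Lemma C1_mul f g f' g' : C1 f f' -> C1 g g' ->
  C1 (fun t => f t * g t) (fun t => f' t * g t + f t * g' t).
Proof.
move=> Hf0 Hg0; have [cf1 cf2] := C1_cont Hf0; have [cg1 cg2] := C1_cont Hg0.
move: Hf0 Hg0 => [Hf cf] [Hg cg]; split; last first.
  by apply: cont_add; apply: cont_mul => //; split.
move=> t; have [f1 f2] := Hf t; have [g1 g2] := Hg t; split.
  under eq_fun do rewrite ReM.
  apply: is_derive_eq (isdB (isdM f1 g1) (isdM f2 g2)) _.
  by rewrite ReD !ReM /=; ring.
under eq_fun do rewrite ImM.
apply: is_derive_eq (isdD (isdM f1 g2) (isdM f2 g1)) _.
by rewrite ImD !ImM /=; ring.
Qed.

Lemma C1_cst (c : R[i]) : C1 (fun _ => c) (fun _ => 0).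
Proof. split; last exact: cont_cst. by move=> t; split; apply: is_derive_cst. Qed.

Lemma C1_sum n (F F' : 'I_n -> R -> R[i]) : (forall i, C1 (F i) (F' i)) ->
  C1 (fun t => \sum_(i < n) F i t) (fun t => \sum_(i < n) F' i t).
Proof.
move=> H; elim: n F F' H => [|n IH] F F' H.
  apply: C1_ext (C1_cst 0) _ _ => t; by rewrite big_ord0.
apply: C1_ext; first apply: C1_add (H ord0) (IH _ _ (fun i => H (lift ord0 i))).
  by move=> t; rewrite big_ord_recl.
by move=> t; rewrite big_ord_recl.
Qed.

Lemma ReN (x : R[i]) : Re (- x) = - Re x. Proof. by case: x. Qed.
Lemma ImN (x : R[i]) : Im (- x) = - Im x. Proof. by case: x. Qed.

Lemma cont_opp f : cont f -> cont (fun t => - f t).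
Proof.
move=> [f1 f2]; split => t.
  under eq_fun do rewrite ReN; by apply: continuousN; apply: f1.
under eq_fun do rewrite ImN; by apply: continuousN; apply: f2.
Qed.

Lemma sumsq_neq0 (x : R[i]) : x != 0 -> Re x * Re x + Im x * Im x != 0.
Proof.
apply: contra => /eqP; rewrite -!expr2.
move/eqP; rewrite paddr_eq0 ?sqr_ge0 // !sqrf_eq0 => /andP[/eqP r0 /eqP i0].
by apply/eqP; move: x r0 i0 => [x y] /= -> ->.
Qed.

Lemma cont_inv f : cont f -> (forall t, f t != 0) -> cont (fun t => (f t)^-1).
Proof.
move=> [f1 f2] nz.
have cN : continuous (fun t => Re (f t) * Re (f t) + Im (f t) * Im (f t)).
  move=> t; have := contD (contM (f1 t) (f1 t)) (contM (f2 t) (f2 t)); exact.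
split => t.
  rewrite (_ : (fun t => _) = fun t =>
     Re (f t) * (Re (f t) * Re (f t) + Im (f t) * Im (f t))^-1).
    by have := contM (f1 t) (@contV (fun s => Re (f s) * Re (f s) + Im (f s) * Im (f s)) t (sumsq_neq0 (nz t)) (cN t)).
  by apply/funext => s; rewrite ReV -!expr2.
rewrite (_ : (fun t => _) = fun t =>
   - Im (f t) * (Re (f t) * Re (f t) + Im (f t) * Im (f t))^-1).
  by have := contM (contN (f2 t)) (@contV (fun s => Re (f s) * Re (f s) + Im (f s) * Im (f s)) t (sumsq_neq0 (nz t)) (cN t)).
by apply/funext => s; rewrite ImV -!expr2.
Qed.

Lemma C1_opp f f' : C1 f f' -> C1 (fun t => - f t) (fun t => - f' t).
Proof.
move=> H; apply: C1_ext (C1_mul (C1_cst (-1)) H) _ _ => t /=; ring.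
Qed.

Lemma C1_inv f f' : C1 f f' -> (forall t, f t != 0) ->
  C1 (fun t => (f t)^-1) (fun t => - f' t * (f t)^-1 ^+ 2).
Proof.
move=> Hf0 nz; have [cf1 cf2] := C1_cont Hf0; move: Hf0 => [Hf cf].
have Nt s : Re (f s) * Re (f s) + Im (f s) * Im (f s) != 0 by exact: sumsq_neq0.
split; last first.
  apply: cont_mul; first exact: cont_opp.
  apply: cont_mul; apply: cont_inv => //; split; by [].
move=> t; have [f1 f2] := Hf t.
have dN := isdD (isdM f1 f1) (isdM f2 f2).
have dV := @isdV (fun s => Re (f s) * Re (f s) + Im (f s) * Im (f s)) _ t (Nt t) dN.
split.
  rewrite (_ : (fun s => _) = fun s =>
     Re (f s) * (Re (f s) * Re (f s) + Im (f s) * Im (f s))^-1).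
    apply: is_derive_eq (isdM f1 dV) _.
    move: (Nt t); case: (f t) => x y; case: (f' t) => x' y' /= N0.
    by field; rewrite !expr2.
  by apply/funext => s; rewrite ReV -!expr2.
have dI := isdM (isdN f2) dV.
rewrite (_ : (fun s => _) = fun s =>
   - Im (f s) * (Re (f s) * Re (f s) + Im (f s) * Im (f s))^-1).
  apply: is_derive_eq dI _.
  move: (Nt t); case: (f t) => x y; case: (f' t) => x' y' /= N0.
  by field; rewrite !expr2.
by apply/funext => s; rewrite ImV -!expr2.
Qed.

Lemma C1_real (h h' : R -> R) : (forall t : R, is_derive t (1:R) h (h' t)) -> continuous h' ->
  C1 (fun t => (h t)%:C) (fun t => (h' t)%:C).
Proof.
move=> H c; split; last exact: cont_real.
by move=> t; split => //=; apply: is_derive_cst.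
Qed.


Local Notation mu := (@lebesgue_measure R).

Lemma integ (h : R -> R) (a b : R) : continuous h -> mu.-integrable `[a, b] (EFin \o h).
Proof.
move=> hc; apply: continuous_compact_integrable; first exact: segment_compact.
by apply: continuous_subspaceT.
Qed.

Lemma cplxE (x y : R[i]) : Re x = Re y -> Im x = Im y -> x = y.
Proof. by case: x => a b; case: y => c d /= -> ->. Qed.

Lemma cint_add (a b : R) f g : cont f -> cont g ->
  cint a b (fun t => f t + g t) = cint a b f + cint a b g.
Proof.
move=> [f1 f2] [g1 g2]; rewrite /cint.
under eq_Rintegral do rewrite ReD.
under [X in _ + iC R * X%:C]eq_Rintegral do rewrite ImD.
rewrite !RintegralD //; try exact: integ.
apply: cplxE => /=; ring.
Qed.

Lemma cint_cmul (a b : R) (c : R[i]) f : cont f ->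
  cint a b (fun t => c * f t) = c * cint a b f.
Proof.
move=> [f1 f2]; rewrite /cint.
under eq_Rintegral do rewrite ReM.
under [X in _ + iC R * X%:C]eq_Rintegral do rewrite ImM.
have i1 (h : R -> R) (r : R) : continuous h -> mu.-integrable `[a, b] (EFin \o (fun t => r * h t)).
  by move=> hc; apply: integ => t; have := contM (@contC r t) (hc t).
rewrite RintegralB // ?i1 // RintegralD // ?i1 // !RintegralZl //; try exact: integ.
by case: c => x y; apply: cplxE => /=; ring.
Qed.

Lemma cint_cst0 (a b : R) : cint a b (fun _ => 0) = 0.
Proof.
rewrite /cint /=; rewrite (_ : (fun _ => _) = cst 0) //.
by rewrite /Rintegral integral0 /=; apply: cplxE => /=; ring.
Qed.

Lemma cint_ext (a b : R) f g : (forall t, f t = g t) -> cint a b f = cint a b g.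
Proof. by move=> /funext ->. Qed.

Lemma cint_sum (a b : R) n (F : 'I_n -> R -> R[i]) : (forall i, cont (F i)) ->
  cint a b (fun t => \sum_(i < n) F i t) = \sum_(i < n) cint a b (F i).
Proof.
elim: n F => [|n IH] F H.
  rewrite big_ord0 -[RHS](cint_cst0 a b); apply: cint_ext => t.
  by rewrite big_ord0.
rewrite big_ord_recl -IH; last by move=> i; apply: H.
rewrite -cint_add //; last by apply: cont_sum => i; apply: H.
by congr cint; apply/funext => t; rewrite big_ord_recl.
Qed.

Lemma RFTC (h h' : R -> R) (T : R) : 0 < T -> (forall t : R, is_derive t (1:R) h (h' t)) ->
  continuous h' -> Rintegral mu `[0, T] h' = h T - h 0.
Proof.
move=> T0 dh ch.
have hc : continuous h.
  by move=> t; apply/differentiable_continuous/derivable1_diffP; case: (dh t).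
rewrite /Rintegral (@continuous_FTC2 _ h' h) //.
- by apply: continuous_subspaceT.
- split.
  + by move=> x _; case: (dh x).
  + by apply: cvg_at_right_filter; apply: hc.
  + by apply: cvg_at_left_filter; apply: hc.
- by move=> x _; rewrite derive1E; case: (dh x).
Qed.

Lemma cint_FTC f f' (T : R) : 0 < T -> C1 f f' -> cint 0 T f' = f T - f 0.
Proof.
move=> T0 [H [c1 c2]]; rewrite /cint.
rewrite (RFTC T0 (fun t => (H t).1) c1) (RFTC T0 (fun t => (H t).2) c2).
by apply: cplxE => /=; rewrite ?ReD ?ImD ?ReN ?ImN; ring.
Qed.

End CF.


Section Trig.
Variable R : realType.

Lemma isdC (a t : R) : is_derive t (1:R) (fun _ : R => a) 0.
Proof. exact: is_derive_cst. Qed.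

Lemma gder (Rad pj qj t : R) : is_derive t (1:R) (fun s => Rad * (cos s * pj + sin s * qj))
  (Rad * (- sin t * pj + cos t * qj)).
Proof.
have H := isdM (isdC Rad t) (isdD (isdM (is_derive_cos t) (isdC pj t))
                                  (isdM (is_derive_sin t) (isdC qj t))).
apply: is_derive_eq H _; ring.
Qed.

Lemma gcont (Rad pj qj : R) : continuous (fun t : R => Rad * (- sin t * pj + cos t * qj)).
Proof.
move=> t.
have := contM (@contC R Rad t) (contD (contM (contN (@continuous_sin R t)) (@contC R pj t))
   (contM (@continuous_cos R t) (@contC R qj t))).
exact.
Qed.

Lemma per_int (f : R -> R) (T : R) : periodic f T -> forall (z : int) x, f (x + z%:~R * T) = f x.
Proof.
move=> fT [N|N] x.
  by rewrite mulrzl; exact: (periodicn fT N x).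
rewrite NegzE mulNr -[in RHS](subrK (N.+1%:~R * T) x) -pmulrn.
by rewrite mulr_natl (periodicn fT).
Qed.

Lemma reduce (t : R) : exists t' : R, [/\ 0 <= t' <= 2 * pi, cos t' = cos t & sin t' = sin t].
Proof.
have p0 : 0 < 2 * pi :> R by rewrite mulr_gt0 ?pi_gt0.
set z := Num.floor (t / (2 * pi)).
exists (t - z%:~R * (2 * pi)); split.
- apply/andP; split.
    rewrite subr_ge0 -ler_pdivlMr //; exact: floor_le.
  rewrite lerBlDr.
  have := floorD1_gt (t / (2 * pi)); rewrite -/z intrD ltr_pdivrMr // mulrDl mul1r => H.
  lra.
- rewrite -[in RHS](subrK (z%:~R * (2 * pi)) t) per_int //.
  by rewrite mulr_natl; exact: cosD2pi.
- rewrite -[in RHS](subrK (z%:~R * (2 * pi)) t) per_int //.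
  by rewrite mulr_natl; exact: sinD2pi.
Qed.

End Trig.

Section Alg.
Variables (R : realType) (n m : nat) (u : 'I_n -> 'I_n)
  (Ups : 'I_n -> 'I_n -> 'I_n -> R[i]).
Hypothesis hm : (1 <= m)%N.
Hypothesis hmn : (m <= n)%N.
Hypothesis hu : forall s : 'I_n, (m <= s)%N -> (u s < m)%N.
Hypothesis hCA : comm_assoc m u Ups.
Local Notation mul := (amul m u Ups).
Local Notation one := (aone R n m).
Local Notation c := (sconst m u Ups).

Lemma mulE x y k : mul x y k = \sum_r \sum_s x r * y s * c r s k.
Proof. by rewrite ffunE. Qed.

Lemma mulDl x y z : mul (x + y) z = mul x z + mul y z.
Proof.
apply/ffunP=> k; rewrite !ffunE -big_split; apply: eq_bigr => r _.
rewrite -big_split; apply: eq_bigr => s _; rewrite ffunE /=.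
by rewrite !mulrDl.
Qed.

Lemma mul1 x : mul one x = x.
Proof.
apply/ffunP=> k; rewrite mulE exchange_big /=.
rewrite (bigD1 k) //= [X in _ + X]big1 ?addr0; last first.
  move=> s sk; rewrite big1 // => r _; rewrite ffunE /sconst.
  case: ifP => rm; last by rewrite !mul0r.
  have ks : (k == s) = false by rewrite eq_sym (negbTE sk).
  case: ifP => sm.
    by case: eqP => [->|] /=; rewrite ?ks ?mulr0.
  by rewrite ks andbF mulr0.
set r0 : 'I_n := if (k < m)%N then k else u k.
have r0m : (r0 < m)%N by rewrite /r0; case: ifP => // /negbT; rewrite -leqNgt => /hu.
rewrite (bigD1 r0) //= [X in _ + X]big1 ?addr0; last first.
  move=> r rr0; rewrite ffunE /sconst; case: ifP => rm; last by rewrite !mul0r.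
  rewrite /r0 in rr0; case: ifP => km; rewrite km in rr0.
    by rewrite (negbTE rr0) mulr0.
  by rewrite (negbTE rr0) mulr0.
rewrite ffunE r0m /sconst r0m /r0; case: ifP => km; rewrite ?km !eqxx /= ?mul1r ?mulr1 //.
Qed.

Lemma mulC x y : mul x y = mul y x. Proof. exact: hCA.1. Qed.
Lemma mulA x y z : mul x (mul y z) = mul (mul x y) z. Proof. by rewrite hCA.2. Qed.

Lemma one_neq0 : one != 0.
Proof.
apply/eqP => /ffunP /(_ (Ordinal (leq_trans hm hmn))); rewrite !ffunE /= hm.
by move/eqP; rewrite oner_eq0.
Qed.

Definition Ar := alg R n.
HB.instance Definition _ := GRing.Zmodule.on Ar.
HB.instance Definition _ := GRing.Zmodule_isComNzRing.Build Ar mulA mulC mul1 mulDl one_neq0.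

Hypothesis hN : (n - m <= 3)%N.

Lemma addE (x y : Ar) k : (x + y) k = x k + y k. Proof. by rewrite ffunE. Qed.
Lemma oppE (x : Ar) k : (- x) k = - x k. Proof. by rewrite ffunE. Qed.
Lemma subE (x y : Ar) k : (x - y) k = x k - y k. Proof. by rewrite !ffunE. Qed.
Lemma oneE k : (1 : Ar) k = (k < m)%N%:R. Proof. by rewrite ffunE. Qed.
Lemma zeroE k : (0 : Ar) k = 0. Proof. by rewrite ffunE. Qed.
Lemma mulE' (x y : Ar) k : (x * y) k = \sum_r \sum_s x r * y s * c r s k.
Proof. by rewrite ffunE. Qed.

Lemma neq_lt (k s : 'I_n) : (k < m)%N -> (m <= s)%N -> (k == s) = false.
Proof. by move=> a b; apply/negbTE; rewrite neq_ltn (leq_trans a b). Qed.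

Lemma cS (k r s : 'I_n) : (k < m)%N -> c r s k = ((r == k) && (s == k))%:R.
Proof.
move=> km; rewrite /sconst.
case: (ltnP r m) => rm; case: (ltnP s m) => sm.
- by case: (eqVneq r k) => [->|rk]; rewrite ?andbT ?andbF // eq_sym.
- have /negbTE -> : k != s by rewrite neq_ltn (leq_trans km sm).
  have /negbTE -> : s != k by rewrite neq_ltn (leq_trans km sm) orbT.
  by rewrite !andbF.
- have /negbTE -> : k != r by rewrite neq_ltn (leq_trans km rm).
  have /negbTE -> : r != k by rewrite neq_ltn (leq_trans km rm) orbT.
  by rewrite !andbF.
- have /negbTE -> : r != k by rewrite neq_ltn (leq_trans km rm) orbT.
  case: ifP => // /leq_trans/(_ (ltnW km)).
  by rewrite ltnNge leq_max rm.
Qed.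

Lemma mulS (x y : Ar) (k : 'I_n) : (k < m)%N -> (x * y) k = x k * y k.
Proof.
move=> km; rewrite mulE' (bigD1 k) //= [X in _ + X]big1 ?addr0; last first.
  move=> r rk; apply: big1 => s _; rewrite cS //.
  by rewrite (negbTE rk) mulr0.
rewrite (bigD1 k) //= [X in _ + X]big1 ?addr0; last first.
  by move=> s sk; rewrite cS // eqxx (negbTE sk) mulr0.
by rewrite cS // eqxx mulr1.
Qed.

Definition Nl (j : nat) (x : Ar) := forall k : 'I_n, (k < m + j)%N -> x k = 0.
Definition Sp (x : Ar) := forall k : 'I_n, (m <= k)%N -> x k = 0.

Lemma mulNl i j (x y : Ar) : Nl i x -> Nl j y -> Nl (maxn i j).+1 (x * y).
Proof.
move=> Hx Hy k kl; rewrite mulE'; apply: big1 => r _; apply: big1 => s _.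
case: (ltnP r (m + i)) => ri; first by rewrite Hx // !mul0r.
case: (ltnP s (m + j)) => sj; first by rewrite Hy // mulr0 mul0r.
rewrite /sconst.
have rm : (r < m)%N = false by apply/negbTE; rewrite -leqNgt (leq_trans (leq_addr _ _) ri).
have sm : (s < m)%N = false by apply/negbTE; rewrite -leqNgt (leq_trans (leq_addr _ _) sj).
rewrite rm sm; case: ifP => [H|_]; last by rewrite mulr0.
exfalso; move: H kl ri sj; move: (nat_of_ord r) (nat_of_ord s) (nat_of_ord k) => a b d.
lia.
Qed.

Lemma Nl3 (x : Ar) : Nl 3 x -> x = 0.
Proof.
move=> H; apply/ffunP => k; rewrite ffunE H //.
by apply: (leq_trans (ltn_ord k)); rewrite -leq_subLR.
Qed.

Lemma mulSp (x y : Ar) : Sp x -> Sp y -> Sp (x * y).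
Proof.
move=> Hx Hy k km; rewrite mulE'; apply: big1 => r _; apply: big1 => s _.
case: (ltnP r m) => rm; last by rewrite Hx // !mul0r.
case: (ltnP s m) => sm; last by rewrite Hy // mulr0 mul0r.
rewrite /sconst rm sm.
have /negbTE -> : k != r by rewrite neq_ltn (leq_trans rm km) orbT.
by rewrite andbF mulr0.
Qed.

Definition sinv (z : Ar) : Ar := [ffun k : 'I_n => if (k < m)%N then (z k)^-1 else 0].
Definition PS (z : Ar) : Ar := [ffun k : 'I_n => if (k < m)%N then z k else 0].
Definition ww (z : Ar) : Ar := sinv z * z - 1.
Definition vv (z : Ar) : Ar := 1 - ww z + ww z * ww z - ww z * ww z * ww z.
Definition invA (z : Ar) : Ar := sinv z * vv z.
Definition nzS (z : Ar) := forall k : 'I_n, (k < m)%N -> z k != 0.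

Lemma Sp_sinv z : Sp (sinv z).
Proof. by move=> k km; rewrite ffunE ltnNge km. Qed.
Lemma Sp_PS z : Sp (PS z).
Proof. by move=> k km; rewrite ffunE ltnNge km. Qed.

Lemma ww_Nl z : nzS z -> Nl 0 (ww z).
Proof.
move=> nz k; rewrite addn0 => km.
by rewrite subE mulS // ffunE km mulVf ?nz // oneE km subrr.
Qed.

Lemma w4 (w : Ar) : Nl 0 w -> w * w * w * w = 0.
Proof.
move=> H; apply: Nl3.
exact: (mulNl (mulNl (mulNl H H) H) H).
Qed.

Lemma invA_ok z : nzS z -> z * invA z = 1.
Proof.
move=> nz; have W4 := w4 (ww_Nl nz).
have E : sinv z * z = 1 + ww z by rewrite /ww; ring.
rewrite /invA /vv mulrA [z * _]mulrC E.
rewrite (_ : _ * _ = 1 - ww z * ww z * ww z * ww z); first by rewrite W4 subr0.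
ring.
Qed.

Lemma ainv_eq z : nzS z -> ainv m u Ups z = invA z.
Proof.
move=> nz; have := @xgetI _ 0 (fun y : alg R n => amul m u Ups z y = aone R n m) _ (invA_ok nz).
rewrite -/(ainv m u Ups z); move: (ainv m u Ups z) => y /= Hy.
have Hy' : z * y = 1 by exact: Hy.
have : (invA z * z) * (y : Ar) = invA z * (z * y) by rewrite mulrA.
by rewrite Hy' mulr1 [invA z * z]mulrC (invA_ok nz) mul1r.
Qed.

Lemma vv_S z (k : 'I_n) : nzS z -> (k < m)%N -> vv z k = 1.
Proof.
move=> nz km; have H : ww z k = 0 by apply: (ww_Nl nz); rewrite addn0.
by rewrite /vv !subE addE !mulS // !H subE H oneE km !mul0r !subr0 addr0.
Qed.

Lemma invA_S z (k : 'I_n) : nzS z -> (k < m)%N -> invA z k = (z k)^-1.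
Proof. by move=> nz km; rewrite /invA mulS // vv_S // mulr1 ffunE km. Qed.

Definition Dalg (F F' : R -> Ar) := forall k, C1 (fun t => F t k) (fun t => F' t k).
Definition Calg (F : R -> Ar) := forall k, cont (fun t => F t k).

Lemma Dalg_Calg F F' : Dalg F F' -> Calg F.
Proof. by move=> H k; apply: C1_cont (H k). Qed.
Lemma Dalg_Calg' F F' : Dalg F F' -> Calg F'.
Proof. by move=> H k; case: (H k). Qed.

Lemma Calg_mul F G : Calg F -> Calg G -> Calg (fun t => F t * G t).
Proof.
move=> HF HG k; apply: (@cont_ext _ (fun t => \sum_r \sum_s F t r * G t s * c r s k)).
  apply: cont_sum => r; apply: cont_sum => s; apply: cont_mul; last exact: cont_cst.
  exact: cont_mul.
by move=> t; rewrite mulE'.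
Qed.

Lemma Dalg_ext F F' G G' : Dalg F F' -> (forall t, F t = G t) -> (forall t, F' t = G' t) ->
  Dalg G G'.
Proof. by move=> H /funext <- /funext <-. Qed.

Lemma Dalg_mul F F' G G' : Dalg F F' -> Dalg G G' ->
  Dalg (fun t => F t * G t) (fun t => F' t * G t + F t * G' t).
Proof.
move=> HF HG k.
apply: (C1_ext (C1_sum (fun r => C1_sum (fun s => C1_mul (C1_mul (HF r) (HG s)) (C1_cst (c r s k)))))).
  by move=> t; rewrite mulE'.
move=> t; rewrite addE !mulE' -big_split; apply: eq_bigr => r _.
rewrite -big_split; apply: eq_bigr => s _ /=; ring.
Qed.

Lemma Dalg_add F F' G G' : Dalg F F' -> Dalg G G' ->
  Dalg (fun t => F t + G t) (fun t => F' t + G' t).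
Proof.
move=> HF HG k; apply: C1_ext (C1_add (HF k) (HG k)) _ _ => t; by rewrite addE.
Qed.

Lemma Dalg_sub F F' G G' : Dalg F F' -> Dalg G G' ->
  Dalg (fun t => F t - G t) (fun t => F' t - G' t).
Proof.
move=> HF HG k; apply: C1_ext (C1_add (HF k) (C1_opp (HG k))) _ _ => t; by rewrite subE.
Qed.

Lemma Dalg_cst (x : Ar) : Dalg (fun _ => x) (fun _ => 0).
Proof. by move=> k; apply: C1_ext (C1_cst (x k)) _ _ => t; rewrite ?zeroE. Qed.

Definition sc (l : R[i]) : Ar := [ffun k : 'I_n => l * (1 : Ar) k].

Lemma scE (l : R[i]) (x : Ar) k : (sc l * x) k = l * x k.
Proof.
have -> : x k = ((1 : Ar) * x) k by rewrite mul1r.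
rewrite mulE' mulE' mulr_sumr; apply: eq_bigr => r _.
rewrite mulr_sumr; apply: eq_bigr => s _; rewrite ffunE; ring.
Qed.

Lemma key (z z' : Ar) (k : 'I_n) : nzS z -> (m <= k)%N ->
  (z' * invA z) k = (vv z * (- (sinv z * sinv z * PS z') * z + sinv z * z')) k.
Proof.
move=> nz km.
have E : z' * invA z = vv z * (- (sinv z * sinv z * PS z') * z + sinv z * z') +
   sinv z * PS z' - sinv z * PS z' * (ww z * ww z * ww z * ww z).
  by rewrite /invA /vv /ww; ring.
rewrite E w4 ?mulr0 ?subr0; last exact: ww_Nl.
by rewrite addE (mulSp (@Sp_sinv z) (@Sp_PS z')) // addr0.
Qed.

Lemma Wd_Nl (z z' : Ar) : nzS z -> Nl 0 (- (sinv z * sinv z * PS z') * z + sinv z * z').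
Proof.
move=> nz k; rewrite addn0 => km.
rewrite addE !mulS // oppE !mulS // !ffunE km.
by field; apply: nz.
Qed.

Lemma sc2 : sc (2^-1) + sc (2^-1) = 1.
Proof.
apply/ffunP => k; rewrite addE !ffunE -mulrDl.
rewrite (_ : 2^-1 + 2^-1 = 1 :> R[i]) ?mul1r //.
by field; rewrite ?pnatr_eq0.
Qed.

Lemma sc3 : sc (3^-1) + sc (3^-1) + sc (3^-1) = 1.
Proof.
apply/ffunP => k; rewrite !addE !ffunE -!mulrDl.
rewrite (_ : 3^-1 + 3^-1 + 3^-1 = 1 :> R[i]) ?mul1r //.
by field; rewrite ?pnatr_eq0.
Qed.

Lemma main_nil (Z Z' : R -> Ar) (T : R) : 0 < T -> Dalg Z Z' -> Z T = Z 0 ->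
  (forall t, nzS (Z t)) ->
  forall k : 'I_n, (m <= k)%N -> cint 0 T (fun t => (Z' t * invA (Z t)) k) = 0.
Proof.
move=> T0 HZ ZT nz k km.
pose Si t := sinv (Z t).
pose Si' t := - (Si t * Si t * PS (Z' t)).
have HSi : Dalg Si Si'.
  move=> j; case: (ltnP j m) => jm.
    apply: C1_ext (C1_inv (HZ j) (fun t => nz t j jm)) _ _ => t.
      by rewrite /Si ffunE jm.
    by rewrite /Si' oppE !mulS // !ffunE jm; ring.
  apply: C1_ext (C1_cst 0) _ _ => t.
    by rewrite /Si ffunE ltnNge jm.
  by rewrite /Si' oppE (mulSp (mulSp (@Sp_sinv _) (@Sp_sinv _)) (@Sp_PS _)) // oppr0.
pose W t := Si t * Z t - 1.
pose W' t := Si' t * Z t + Si t * Z' t.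
have HW : Dalg W W'.
  by apply: Dalg_ext (Dalg_sub (Dalg_mul HSi HZ) (Dalg_cst 1)) _ _ => t //; rewrite subr0.
pose c2 := sc (2^-1). pose c3 := sc (3^-1).
pose H t := W t - c2 * (W t * W t) + c3 * (W t * W t * W t).
pose D t := W' t - (0 * (W t * W t) + c2 * (W' t * W t + W t * W' t)) +
  (0 * (W t * W t * W t) + c3 * ((W' t * W t + W t * W' t) * W t + W t * W t * W' t)).
have HH : Dalg H D := Dalg_add (Dalg_sub HW (Dalg_mul (Dalg_cst c2) (Dalg_mul HW HW)))
   (Dalg_mul (Dalg_cst c3) (Dalg_mul (Dalg_mul HW HW) HW)).
have E t : (Z' t * invA (Z t)) k = D t k.
  rewrite key //.
  have D1 : D t = W' t - (c2 + c2) * W t * W' t + (c3 + c3 + c3) * W t * W t * W' t.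
    rewrite /D; move: (W t) (W' t) (c2) (c3) => a b x y; ring.
  have W3 : W t * W t * W t * W' t = 0.
    have N0 : Nl 0 (W t) := ww_Nl (nz t).
    have N0' : Nl 0 (W' t) := Wd_Nl (Z' t) (nz t).
    have N3 := mulNl (mulNl (mulNl N0 N0) N0) N0'.
    exact: Nl3 N3.
  have D2 : D t = vv (Z t) * W' t + W t * W t * W t * W' t.
    rewrite D1 sc2 sc3.
    change (vv (Z t)) with (1 - W t + W t * W t - W t * W t * W t).
    by move: (W t) (W' t) => a b; ring.
  by rewrite D2 W3 addr0.
rewrite (cint_ext 0 T E) (cint_FTC T0 (HH k)).
by rewrite /H /W /Si ZT subrr.
Qed.

Lemma Calg_add F G : Calg F -> Calg G -> Calg (fun t => F t + G t).
Proof. by move=> HF HG k; apply: cont_ext (cont_add (HF k) (HG k)) _ => t; rewrite addE. Qed.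
Lemma Calg_sub F G : Calg F -> Calg G -> Calg (fun t => F t - G t).
Proof.
by move=> HF HG k; apply: cont_ext (cont_add (HF k) (cont_opp (HG k))) _ => t; rewrite subE.
Qed.
Lemma Calg_cst (x : Ar) : Calg (fun _ => x).
Proof. by move=> k; apply: cont_cst. Qed.

Lemma Calg_invA (Z Z' : R -> Ar) : Dalg Z Z' -> (forall t, nzS (Z t)) ->
  Calg (fun t => invA (Z t)).
Proof.
move=> HZ nz.
have HS : Calg (fun t => sinv (Z t)).
  move=> j; case: (ltnP j m) => jm.
    apply: cont_ext (cont_inv (C1_cont (HZ j)) (fun t => nz t j jm)) _ => t.
    by rewrite ffunE jm.
  by apply: cont_ext (cont_cst 0) _ => t; rewrite ffunE ltnNge jm.
have HW : Calg (fun t => ww (Z t)).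
  exact: Calg_sub (Calg_mul HS (Dalg_Calg HZ)) (Calg_cst 1).
apply: Calg_mul => //.
apply: Calg_sub; first apply: Calg_add; first apply: Calg_sub (Calg_cst 1) HW.
  exact: Calg_mul.
by apply: Calg_mul => //; apply: Calg_mul.
Qed.

Lemma cint_alg (T : R) (A : Ar) (F : R -> Ar) (k : 'I_n) : Calg F ->
  (A * [ffun j => cint 0 T (fun t => F t j)]) k = cint 0 T (fun t => (A * F t) k).
Proof.
move=> HF.
rewrite (@cint_ext _ 0 T _ (fun t => \sum_r \sum_s (A r * c r s k) * F t s)); last first.
  by move=> t; rewrite mulE'; apply: eq_bigr => r _; apply: eq_bigr => s _; ring.
rewrite mulE' cint_sum; last first.
  by move=> r; apply: cont_sum => s; exact: (cont_mul (cont_cst _) (HF s)).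
apply: eq_bigr => r _; rewrite cint_sum; last first.
  by move=> s; exact: (cont_mul (cont_cst _) (HF s)).
apply: eq_bigr => s _; rewrite cint_cmul; last exact: HF s.
rewrite ffunE; ring.
Qed.

Lemma amul_cint (T : R) (A : Ar) (F : R -> Ar) (k : 'I_n) : Calg F ->
  (amul m u Ups A [ffun j => cint 0 T (fun t => F t j)]) k = cint 0 T (fun t => (A * F t) k).
Proof. exact: cint_alg. Qed.

Lemma Calg_sc (h : R -> R) : continuous h -> Calg (fun t => sc (h t)%:C).
Proof.
move=> hc k; apply: cont_ext (cont_mul (cont_real hc) (cont_cst ((1 : Ar) k))) _ => t.
by rewrite !ffunE.
Qed.

Lemma final (a b : alg R n) (Rad : R) (p q : 'I_3 -> R) :
  let g := fun (j : 'I_3) (t : R) => Rad * (cos t * p j + sin t * q j) in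
  let zC := fun t : R => zeta m a b (g 0 t) (g 1 t) (g 2%:R t) in
  (forall k : 'I_n, (k < m)%N ->
     pos_jordan_around0 0 (2 * pi) (fun t => zC t k)) ->
  curve_int m u Ups a b g 0 (2 * pi) (fun t => ainv m u Ups (zC t))
  = [ffun k => (2 * pi)%:C * iC R * aone R n m k].
Proof.
move=> g zC hJ.
have p0 : 0 < 2 * pi :> R by rewrite mulr_gt0 ?pi_gt0.
pose gd (j : 'I_3) (t : R) := Rad * (- sin t * p j + cos t * q j).
have Hg j : forall t : R, is_derive t (1:R) (g j) (gd j t) := fun t => @gder R Rad (p j) (q j) t.
have Hgc j : continuous (gd j) := @gcont R Rad (p j) (q j).
have Hd1 j t : derive1 (g j) t = gd j t by rewrite derive1E; case: (Hg j t).
pose Z t : Ar := zC t.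
pose Z' t : Ar := sc (gd 0 t)%:C + (a : Ar) * sc (gd 1 t)%:C + (b : Ar) * sc (gd 2%:R t)%:C.
have Z'E t k : Z' t k = (gd 0 t)%:C * aone R n m k + (gd 1 t)%:C * a k + (gd 2%:R t)%:C * b k.
  rewrite /Z' !addE [(a : Ar) * _]mulrC [(b : Ar) * _]mulrC !scE ffunE.
  by [].
have HZ : Dalg Z Z'.
  move=> k.
  have HC := (C1_add (C1_add (C1_mul (C1_real (Hg 0) (Hgc 0)) (C1_cst (aone R n m k)))
     (C1_mul (C1_real (Hg 1) (Hgc 1)) (C1_cst (a k))))
     (C1_mul (C1_real (Hg 2%:R) (Hgc 2%:R)) (C1_cst (b k)))).
  apply: (C1_ext HC) => t.
    change (Z t k) with (zeta m a b (g 0 t) (g 1 t) (g 2%:R t) k).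
    by rewrite /zeta !ffunE.
  by rewrite Z'E; ring.
have Zk t k : Z t k = (g 0 t)%:C * aone R n m k + (g 1 t)%:C * a k + (g 2%:R t)%:C * b k.
  change (Z t k) with (zeta m a b (g 0 t) (g 1 t) (g 2%:R t) k).
  by rewrite /zeta ffunE.
have ZT : Z (2 * pi) = Z 0.
  apply/ffunP => k; rewrite !Zk /g.
  by rewrite mulr_natl cos2pi sin2pi cos0 sin0.
have nz t : nzS (Z t).
  move=> k km; have [_ [nz0 _]] := hJ k km.
  have [t' [t'b ct st]] := reduce t.
  have -> : Z t k = zC t' k by rewrite Zk /g -ct -st.
  exact: nz0.
have HPs : Calg (fun t => invA (Z t)) := Calg_invA HZ nz.
have Jf (j : 'I_3) : [ffun k => cint 0 (2 * pi) (fun t => ainv m u Ups (zC t) k * (derive1 (g j) t)%:C)]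
   = [ffun k => cint 0 (2 * pi) (fun t => (sc (gd j t)%:C * invA (Z t)) k)].
  apply/ffunP => k; rewrite !ffunE; apply: cint_ext => t.
  by rewrite scE Hd1 (ainv_eq (nz t)) mulrC.
pose J' (j : 'I_3) := [ffun k => cint 0 (2 * pi) (fun t => (sc (gd j t)%:C * invA (Z t)) k)].
have E1 : curve_int m u Ups a b g 0 (2 * pi) (fun t => ainv m u Ups (zC t)) =
   J' 0 + amul m u Ups a (J' 1) + amul m u Ups b (J' 2%:R).
  by rewrite /J' -!Jf.
have HF j : Calg (fun t => sc (gd j t)%:C * invA (Z t)) by apply: Calg_mul => //; apply: Calg_sc.
rewrite E1; apply/ffunP => k.
rewrite !addE !amul_cint //.
rewrite (_ : J' 0 k = cint 0 (2 * pi) (fun t => (sc (gd 0 t)%:C * invA (Z t)) k)); last first.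
  by rewrite /J' ffunE.
have HCk (x : Ar) j : cont (fun t => (x * (sc (gd j t)%:C * invA (Z t))) k).
  by apply: Calg_mul; [apply: Calg_cst|apply: HF].
rewrite -!cint_add; try exact: (HF 0 k); try exact: (HCk a 1); try exact: (HCk b 2%:R);
  try exact: (cont_add (HF 0 k) (HCk a 1)).
rewrite (@cint_ext _ 0 (2 * pi) _ (fun t => (Z' t * invA (Z t)) k)); last first.
  move=> t; rewrite -!addE.
  have -> : sc (gd 0 t)%:C * invA (Z t) + (a : Ar) * (sc (gd 1 t)%:C * invA (Z t)) +
     (b : Ar) * (sc (gd 2%:R t)%:C * invA (Z t)) = Z' t * invA (Z t) by rewrite /Z'; ring.
  by [].
rewrite ffunE; case: (ltnP k m) => km; last first.
  by rewrite (main_nil p0 HZ ZT nz km) ffunE ltnNge km mulr0.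
have [Hd _] := HZ k.
rewrite (@cint_ext _ 0 (2 * pi) _ (fun t => cderive (fun s => zC s k) t / zC t k)); last first.
  move=> t; rewrite mulS // (invA_S (nz t)) //.
  congr (_ * _).
  case: (Hd t) => d1 d2.
  case: d1 => _ e1; case: d2 => _ e2.
  rewrite /cderive !derive1E.
  change (fun s => Re (zC s k)) with (fun s => Re (Z s k)).
  change (fun s => Im (zC s k)) with (fun s => Im (Z s k)).
  rewrite e1 e2; apply: cplxE => /=; ring.
have [_ [_ Wd]] := hJ k km; rewrite /winding0 in Wd.
have y0 : (2 * pi)%:C * iC R != 0.
  apply: mulf_neq0.
    by apply/eqP => /(congr1 (@complex.Re R)) /= H; move: p0; rewrite H; lra.
  by apply/eqP => /(congr1 (@complex.Im R)) /= /eqP; rewrite oner_eq0.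
rewrite ffunE km mulr1 -[LHS](divfK y0) Wd mul1r.
by [].
Qed.

End Alg.

Unset Implicit Arguments.

Theorem theorem7 (R : realType) (n m : nat)
    (u : 'I_n -> 'I_n) (Ups : 'I_n -> 'I_n -> 'I_n -> R[i])
    (a b : alg R n) (Rad : R) (p q : 'I_3 -> R) :
  (1 <= m)%N -> (m <= n)%N ->
  (* u_s in {1..m} for s in {m+1..n} *)
  (forall s : 'I_n, (m <= s)%N -> (u s < m)%N) ->
  comm_assoc m u Ups ->
  (* dim_C N = n - m <= 3 *)
  (n - m <= 3)%N ->
  (* e1 = 1, e2 = a, e3 = b linearly independent over R *)
  (forall x y z : R, zeta m a b x y z = 0 -> [/\ x = 0, y = 0 & z = 0]) ->
  (* f_u(E_3) = C for all u *)
  (forall k : 'I_n, (k < m)%N ->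
     forall w : R[i], exists x y z : R, zeta m a b x y z k = w) ->
  (* C' : circle of radius Rad > 0 centered at 0 in the plane spanned by the
     orthonormal vectors p, q, parametrized by t |-> Rad (cos t p + sin t q) *)
  0 < Rad ->
  \sum_(j < 3) p j ^+ 2 = 1 -> \sum_(j < 3) q j ^+ 2 = 1 ->
  \sum_(j < 3) p j * q j = 0 ->
  let g := fun (j : 'I_3) (t : R) => Rad * (cos t * p j + sin t * q j) in
  let zC := fun t : R => zeta m a b (g 0 t) (g 1 t) (g 2%:R t) in
  (* each f_u(C) is a positively oriented closed Jordan curve around 0 *)
  (forall k : 'I_n, (k < m)%N ->
     pos_jordan_around0 0 (2 * pi) (fun t => zC t k)) ->
  curve_int m u Ups a b g 0 (2 * pi) (fun t => ainv m u Ups (zC t))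
  = [ffun k => (2 * pi)%:C * iC R * aone R n m k].
Proof.
move=> hm hmn hu hCA hN _ _ _ _ _ _.
exact: (final hm hmn hu hCA hN).
Qed.
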